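(* Let $r\geq 2$ and $d\geq 2$ be integers, let $\mathbf a=(a_1,\ldots,a_r)$ be a sequence of positive integers, and let $D(d)=\operatorname{lcm}(da_1,\ldots,da_r)$. For an integer $n\geq 0$ let $\mathbf p_{\mathbf a,d}(n)$ denote the number of integer tuples $(x_1,\ldots,x_r)$ with $\sum_{i=1}^r a_ix_i=n$, $x_i\geq 0$ and $x_i\equiv 0$ or $x_i\equiv 1\pmod d$ for all $i$. Then for all $n\geq 0$, $$\mathbf p_{\mathbf a,d}(n)=\frac{1}{(r-1)!}\sum_{\varepsilon\in\{0,1\}^r}\ \sum_{\substack{0\leq j_i\leq \frac{D(d)}{da_i}-1,\ 1\leq i\leq r\\ \sum_{i=1}^r a_i(dj_i+\varepsilon_i)\equiv n \pmod{D(d)}}}\ \prod_{\ell=1}^{r-1}\left(\frac{n-\sum_{i=1}^r a_i(dj_i+\varepsilon_i)}{D(d)}+\ell\right),$$ where $\varepsilon=(\varepsilon_1,\ldots,\varepsilon_r)$. Moreover, the polynomial part of $\mathbf p_{\mathbf a,d}$ is $$P_{\mathbf a,d}(n)=\frac{1}{D(d)(r-1)!}\sum_{\substack{\varepsilon\in\{0,1\}^r\\ 0\leq j_i\leq \frac{D(d)}{da_i}-1,\ 1\leq i\leq r}}\ \prod_{\ell=1}^{r-1}\left(\frac{n-\sum_{i=1}^r a_i(dj_i+\varepsilon_i)}{D(d)}+\ell\right).$$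
   Context: The polynomial part $P_{\mathbf a,d}(n)$ of $\mathbf p_{\mathbf a,d}$ is the polynomial in $n$ given by the coefficient of $t^{-1}$ in the Laurent expansion at $t=0$ of $e^{nt}\prod_{i=1}^r\dfrac{1+e^{-a_it}}{1-e^{-da_it}}$ (equivalently, the sum over $J\subseteq\{1,\ldots,r\}$ of Sylvester's first waves $P_{d\mathbf a}(n-\sum_{i\in J}a_i)$ of the restricted partition function with parts $da_1,\ldots,da_r$). *)

(* Defs.v *)
From mathcomp Require Import all_boot all_order all_algebra.
Set Implicit Arguments. Unset Strict Implicit. Unset Printing Implicit Defensive.
Import Order.TTheory GRing.Theory Num.Theory.
Local Open Scope ring_scope.

Definition Dlcm (r : nat) (a : 'I_r -> nat) (d : nat) : nat :=
  \big[lcmn/1%N]_(i < r) (d * a i)%N.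

(* Since a_i >= 1, each x_i <= n, so we range over
   {ffun 'I_r -> 'I_(n.+1)} (the bound is automatic when all a_i > 0). *)
Definition pad (r : nat) (a : 'I_r -> nat) (d n : nat) : nat :=
  #|[set x : {ffun 'I_r -> 'I_(n.+1)} |
      ((\sum_(i < r) a i * x i)%N == n) &&
      [forall i, ((x i %% d)%N == 0%N) || ((x i %% d)%N == 1%N)]]|.

Definition ps := nat -> rat.

Definition ps_mul (f g : ps) : ps := fun k => \sum_(i < k.+1) f i * g (k - i)%N.

Definition ps_one : ps := fun k => (k == 0%N)%:R.

(* coefficients g_0..g_k of the multiplicative inverse of f (f 0 != 0) *)
Fixpoint ps_inv_aux (f : ps) (k : nat) : seq rat :=
  match k with
  | 0 => [:: (f 0%N)^-1]
  | k'.+1 => let s := ps_inv_aux f k' in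
             rcons s (- (f 0%N)^-1 * \sum_(i < k'.+1) f (k'.+1 - i)%N * nth 0 s i)
  end.
Definition ps_inv (f : ps) : ps := fun k => nth 0 (ps_inv_aux f k) k.

Definition ps_exp (c : rat) : ps := fun k => c ^+ k / (k`!)%:R.

Definition ps_num (c : rat) : ps := fun k => ps_one k + ps_exp (- c) k.

(* (1 - e^{-c t}) / t  (a genuine power series with constant term c) *)
Definition ps_den (c : rat) : ps := fun k => - ps_exp (- c) k.+1.

(* The polynomial part P_{a,d}(n): coefficient of t^{-1} in the Laurent
   expansion at 0 of  e^{nt} prod_i (1 + e^{-a_i t}) / (1 - e^{-d a_i t})
   = t^{-r} * [ e^{nt} prod_i (1 + e^{-a_i t}) * (prod_i (1-e^{-d a_i t})/t)^{-1} ],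
   i.e. the coefficient of t^{r-1} of the bracketed power series. *)
Definition polypart (r : nat) (a : 'I_r -> nat) (d : nat) (n : rat) : rat :=
  ps_mul (ps_exp n)
    (ps_mul (\big[ps_mul/ps_one]_(i < r) ps_num (a i)%:R)
            (ps_inv (\big[ps_mul/ps_one]_(i < r) ps_den (d * a i)%N%:R)))
    r.-1.

(* Main.v *)
Require Import Defs.
From HB Require Import structures.
From mathcomp Require Import all_boot all_order all_algebra.
From mathcomp Require Import boolp.
From mathcomp Require Import ring zify.
Set Implicit Arguments. Unset Strict Implicit. Unset Printing Implicit Defensive.
Import Order.TTheory GRing.Theory Num.Theory.
Local Open Scope ring_scope.

Definition PS : Type := nat -> rat.
HB.instance Definition _ := Choice.on PS.

Definition ps0 : PS := fun _ => 0.
Definition psadd (f g : PS) : PS := fun k => f k + g k.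
Definition psopp (f : PS) : PS := fun k => - f k.

Lemma psaddA : associative psadd.
Proof. by move=> f g h; apply: funext => k; rewrite /psadd addrA. Qed.
Lemma psaddC : commutative psadd.
Proof. by move=> f g; apply: funext => k; rewrite /psadd addrC. Qed.
Lemma psadd0 : left_id ps0 psadd.
Proof. by move=> f; apply: funext => k; rewrite /psadd /ps0 add0r. Qed.
Lemma psaddN : left_inverse ps0 psopp psadd.
Proof. by move=> f; apply: funext => k; rewrite /psadd /ps0 /psopp addNr. Qed.

HB.instance Definition _ := GRing.isZmodule.Build PS psaddA psaddC psadd0 psaddN.

Lemma psaddE (f g : PS) k : (f + g) k = f k + g k. Proof. by []. Qed.
Lemma psoppE (f : PS) k : (- f) k = - f k. Proof. by []. Qed.
Lemma ps0E k : (0 : PS) k = 0. Proof. by []. Qed.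

Definition tr (m : nat) (f : PS) : {poly rat} := \poly_(i < m.+1) f i.

Lemma ps_mul_tr m (f g : PS) k : (k <= m)%N ->
  ps_mul f g k = (tr m f * tr m g)`_k.
Proof.
move=> km; rewrite coefM /ps_mul; apply: eq_bigr => i _.
have ik : (i <= k)%N by rewrite -ltnS.
rewrite /tr !coef_poly ltnS (leq_trans ik km) ltnS (leq_trans (leq_subr _ _) km).
by [].
Qed.

Lemma coefM_agree (p q s : {poly rat}) k :
  (forall i, (i <= k)%N -> p`_i = q`_i) -> (p * s)`_k = (q * s)`_k.
Proof.
move=> H; rewrite !coefM; apply: eq_bigr => i _; rewrite H //.
by rewrite -ltnS.
Qed.

Lemma ps_mulA : associative (ps_mul : PS -> PS -> PS).
Proof.
move=> f g h; apply: funext => k.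
have E (u v : PS) : forall i, (i <= k)%N -> (tr k (ps_mul u v))`_i = (tr k u * tr k v)`_i.
  move=> i ik; rewrite /tr coef_poly ltnS ik; exact: ps_mul_tr.
rewrite [LHS](ps_mul_tr _ _ (leqnn k)) [RHS](ps_mul_tr _ _ (leqnn k)).
rewrite [tr k f * _]mulrC (coefM_agree _ (E g h)) (coefM_agree _ (E f g)).
by rewrite mulrC mulrA.
Qed.

Lemma ps_mulC : commutative (ps_mul : PS -> PS -> PS).
Proof.
move=> f g; apply: funext => k.
by rewrite (ps_mul_tr _ _ (leqnn k)) mulrC -ps_mul_tr.
Qed.

Lemma ps_mul1 : left_id (ps_one : PS) ps_mul.
Proof.
move=> f; apply: funext => k; rewrite /ps_mul big_ord_recl /= /ps_one eqxx mul1r subn0.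
by rewrite big1 ?addr0 // => i _; rewrite mul0r.
Qed.

Lemma ps_mulDl : left_distributive (ps_mul : PS -> PS -> PS) +%R.
Proof.
move=> f g h; apply: funext => k.
rewrite psaddE /ps_mul -big_split /=; apply: eq_bigr => i _; exact: mulrDl.
Qed.

Lemma ps_one_neq0 : (ps_one : PS) != 0.
Proof.
apply/eqP => /(congr1 (fun f : PS => f 0%N)); rewrite /ps_one /= /ps0 /=.
by move/eqP; rewrite oner_eq0.
Qed.

HB.instance Definition _ := GRing.Zmodule_isComNzRing.Build PS
  ps_mulA ps_mulC ps_mul1 ps_mulDl ps_one_neq0.

Lemma psmulE (f g : PS) : f * g = ps_mul f g. Proof. by []. Qed.
Lemma ps1E : (1 : PS) = ps_one. Proof. by []. Qed.


Lemma psmul0 (f g : PS) : (f * g) 0%N = f 0%N * g 0%N.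
Proof. by rewrite psmulE /ps_mul big_ord_recl big_ord0 addr0 subn0. Qed.

Lemma ps_sumE (I : Type) (s : seq I) (P : pred I) (F : I -> PS) k :
  (\sum_(i <- s | P i) F i) k = \sum_(i <- s | P i) F i k.
Proof. by elim/big_rec2: _ => // i y1 y2 _ <-. Qed.

Lemma ps_prod0 (I : Type) (s : seq I) (P : pred I) (F : I -> PS) :
  (\prod_(i <- s | P i) F i) 0%N = \prod_(i <- s | P i) F i 0%N.
Proof. by elim/big_rec2: _ => // i y1 y2 _ <-; rewrite psmul0. Qed.

Lemma psmulnE (f : PS) n k : (f *+ n) k = f k *+ n.
Proof. by elim: n => [|n IH]; rewrite ?mulr0n // !mulrS psaddE IH. Qed.

Definition C (c : rat) : PS := fun k => if k is 0 then c else 0.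

Lemma CmulE c (f : PS) k : (C c * f) k = c * f k.
Proof.
rewrite psmulE /ps_mul big_ord_recl /= subn0 big1 ?addr0 // => i _.
by rewrite /C /= mul0r.
Qed.

Lemma C1 : C 1 = 1.
Proof. by apply: funext => -[|k]. Qed.

Lemma CM a b : C (a * b) = C a * C b.
Proof. by apply: funext => k; rewrite CmulE; case: k => [|k] //=; rewrite mulr0. Qed.

Lemma CD a b : C (a + b) = C a + C b.
Proof. by apply: funext => k; rewrite psaddE; case: k => [|k] //=; rewrite addr0. Qed.

Lemma CN a : C (- a) = - C a.
Proof. by apply: funext => k; rewrite psoppE; case: k => [|k] //=; rewrite oppr0. Qed.

(* shift = multiplication by t *)
Definition sh (f : PS) : PS := fun k => if k is k'.+1 then f k' else 0.

Lemma shM (f g : PS) : sh (f * g) = sh f * g.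
Proof.
apply: funext => -[|k]; rewrite !psmulE /ps_mul /sh.
  by rewrite big_ord_recl big_ord0 /= mul0r addr0.
rewrite [RHS]big_ord_recl /= mul0r add0r; apply: eq_bigr => i _.
by rewrite /bump /= add1n subSS.
Qed.

Lemma shD (f g : PS) : sh (f + g) = sh f + sh g.
Proof. by apply: funext => -[|k] //=; rewrite /sh psaddE addr0. Qed.

Lemma shN (f : PS) : sh (- f) = - sh f.
Proof. by apply: funext => -[|k] //=; rewrite /sh psoppE oppr0. Qed.

Lemma sh_inj : injective sh.
Proof. by move=> f g E; apply: funext => k; have := congr1 (fun h : PS => h k.+1) E. Qed.

(* Euler operator t d/dt *)
Definition th (f : PS) : PS := fun k => k%:R * f k.

Lemma thM (f g : PS) : th (f * g) = th f * g + f * th g.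
Proof.
apply: funext => k; rewrite psaddE !psmulE /ps_mul /th mulr_sumr -big_split /=.
apply: eq_bigr => i _.
have ik : (i <= k)%N by rewrite -ltnS.
have -> : k%:R = i%:R + (k - i)%:R :> rat by rewrite -natrD subnKC.
ring.
Qed.

Lemma thD (f g : PS) : th (f + g) = th f + th g.
Proof. by apply: funext => k; rewrite psaddE /th mulrDr. Qed.

Lemma thN (f : PS) : th (- f) = - th f.
Proof. by apply: funext => k; rewrite psoppE /th mulrN. Qed.

Lemma thC c : th (C c) = 0.
Proof. by apply: funext => -[|k]; rewrite /th /C ?mul0r ?mulr0. Qed.

Lemma th1 : th 1 = 0.
Proof. by rewrite -C1 thC. Qed.

Lemma thX (g : PS) n : th (g ^+ n.+1) = (g ^+ n * th g) *+ n.+1.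
Proof.
elim: n => [|n IH]; first by rewrite expr1 expr0 mul1r.
rewrite exprS thM IH mulrnAr [in RHS]mulrSr addrC mulrA -exprS.
by rewrite mulrC.
Qed.

Lemma size_ps_inv_aux (f : PS) k : size (ps_inv_aux f k) = k.+1.
Proof. by elim: k => [|k IH] //=; rewrite size_rcons IH. Qed.

Lemma ps_inv_aux_nth (f : PS) k i : (i <= k)%N -> nth 0 (ps_inv_aux f k) i = ps_inv f i.
Proof.
elim: k => [|k IH]; first by rewrite leqn0 => /eqP ->.
rewrite leq_eqVlt => /orP [/eqP -> //|]; rewrite ltnS => ik.
by rewrite /= nth_rcons size_ps_inv_aux ltnS ik IH.
Qed.

Lemma ps_invS (f : PS) k : ps_inv f k.+1 =
  - (f 0%N)^-1 * \sum_(i < k.+1) f (k.+1 - i)%N * ps_inv f i.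
Proof.
rewrite /ps_inv /= nth_rcons size_ps_inv_aux ltnn eqxx; congr (_ * _).
apply: eq_bigr => i _; rewrite ps_inv_aux_nth //; by rewrite -ltnS.
Qed.

Lemma ps_invP (f : PS) : f 0%N != 0 -> f * ps_inv f = 1.
Proof.
move=> f0; apply: funext => -[|k].
  by rewrite psmul0 /ps_inv /= mulfV.
rewrite psmulE ps_mulC /ps_mul big_ord_recr /= subnn ps_invS.
rewrite [X in _ + X]mulrC mulrA mulrN mulfV // mulN1r.
by rewrite [X in X - _](eq_bigr (fun i : 'I_k.+1 => f (k.+1 - i)%N * ps_inv f i)) ?subrr // => i _; rewrite mulrC.
Qed.

Notation pinv f := (ps_inv f : PS).
Notation ex c := (ps_exp c : PS).
Lemma fact_neq0 n : (n`!)%:R != 0 :> rat.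
Proof. by rewrite pnatr_eq0 -lt0n fact_gt0. Qed.

Lemma expD a b : (ps_exp a : PS) * ps_exp b = ps_exp (a + b).
Proof.
apply: funext => k; rewrite psmulE /ps_mul /ps_exp addrC exprDn mulr_suml.
apply: eq_bigr => i _.
have ik : (i <= k)%N by rewrite -ltnS.
have F : (k`!)%:R = ('C(k, i))%:R * (i`!)%:R * ((k - i)`!)%:R :> rat.
  by rewrite -!natrM -mulnA bin_fact.
rewrite F -mulr_natr.
have := fact_neq0 i; have := fact_neq0 (k - i); have : ('C(k, i))%:R != 0 :> rat.
  by rewrite pnatr_eq0 -lt0n bin_gt0.
move=> h1 h2 h3; field.
by rewrite h1 h2 h3.
Qed.

Lemma exp0 : (ps_exp 0 : PS) = 1.
Proof.
apply: funext => -[|k]; rewrite /ps_exp ps1E /ps_one /=.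
  by rewrite expr0 fact0 divr1.
by rewrite expr0n /= mul0r.
Qed.

Lemma expMn (n : nat) x : (ps_exp (n%:R * x) : PS) = (ps_exp x : PS) ^+ n.
Proof.
elim: n => [|n IH]; first by rewrite mul0r exp0.
by rewrite exprS -IH expD -natr1 mulrDl mul1r addrC.
Qed.

Lemma th_exp c : th (ps_exp c) = C c * sh (ps_exp c).
Proof.
apply: funext => k; rewrite CmulE /th /ps_exp; case: k => [|k] /=.
  by rewrite mul0r mulr0.
rewrite factS natrM exprS.
have := fact_neq0 k; move=> h.
have h2 : 1 + k%:R != 0 :> rat by rewrite addrC natr1 pnatr_eq0.
field.
by rewrite h h2.
Qed.

Lemma sh_den c : sh (ps_den c) = 1 - (ps_exp (- c) : PS).
Proof.
apply: funext => -[|k]; rewrite psaddE psoppE ps1E /ps_one /sh /=.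
  by rewrite /ps_exp expr0 fact0 divr1 subrr.
by rewrite /ps_den add0r.
Qed.

Lemma th_den c : th (ps_den c) = C c * (ps_exp (- c) : PS) - (ps_den c : PS).
Proof.
apply: funext => k; rewrite psaddE psoppE CmulE /th /ps_den /ps_exp.
rewrite factS natrM exprS.
have := fact_neq0 k; move=> h.
have h2 : 1 + k%:R != 0 :> rat by rewrite addrC natr1 pnatr_eq0.
field.
by rewrite h h2.
Qed.

Lemma ps_numE c : (ps_num c : PS) = 1 + (ps_exp (- c) : PS).
Proof. by []. Qed.

Lemma ps_den0 c : ps_den c 0%N = c.
Proof. by rewrite /ps_den /ps_exp expr1 divr1 opprK. Qed.

Lemma shE (f : PS) : sh f = sh 1 * f.
Proof. by rewrite -shM mul1r. Qed.

Section Key.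
Variables (c D : rat).
Hypothesis D0 : D != 0.
Let Ed : PS := ps_den D.
Let g : PS := ps_inv Ed.
Let F (s : nat) : PS := (ps_exp c : PS) * g ^+ s.

Lemma Edg : Ed * g = 1.
Proof. by apply: ps_invP; rewrite /Ed ps_den0. Qed.

Lemma thg : th g = - (g * g * th Ed).
Proof.
have := thM Ed g; rewrite Edg th1 => /esym /eqP; rewrite addrC addr_eq0 => /eqP H.
have -> : th g = g * (Ed * th g) by rewrite mulrA [g * Ed]mulrC Edg mul1r.
by rewrite H; ring.
Qed.

Lemma key n : (n.+1)%:R * D * F n.+2 n.+1 = (c + (n.+1)%:R * D) * F n.+1 n.
Proof.
set s1 := sh 1.
have sEg : sh Ed * g = s1 by rewrite -shM Edg.
have thE : th Ed = C D - C D * sh Ed - Ed.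
  have e1 : (ps_exp (- D) : PS) = 1 - sh Ed by rewrite /Ed sh_den; ring.
  by rewrite /Ed th_den e1; ring.
have thP : th (F n.+1) = C c * (s1 * F n.+1)
    - (C D * F n.+2 - C D * (s1 * F n.+1) - F n.+1) *+ n.+1.
  rewrite /F thM thX th_exp thg thE (shE (ps_exp c)) -/s1.
  have -> : (ps_exp c : PS) * ((g ^+ n * - (g * g * (C D - C D * sh Ed - Ed))) *+ n.+1)
     = (- (C D * ((ps_exp c : PS) * g ^+ n.+2) - C D * ((ps_exp c : PS) * g ^+ n.+1) * (sh Ed * g)
            - (ps_exp c : PS) * g ^+ n.+1 * (Ed * g))) *+ n.+1.
    rewrite !exprS; ring.
  rewrite sEg Edg; ring.
have := congr1 (fun f : PS => f n.+1) thP.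
rewrite /th psaddE psoppE psmulnE !psaddE !psoppE !CmulE.
rewrite /s1 -!shE /sh => H.
apply/eqP; rewrite -subr_eq0; apply/eqP; move: H.
move: (F n.+2 n.+1) (F n.+1 n.+1) (F n.+1 n) => x y z H.
rewrite -mulr_natl in H.
move/eqP: H; rewrite -subr_eq0 => /eqP H.
by rewrite -H; ring.
Qed.

Lemma F_base : F 1 0%N = D^-1.
Proof.
rewrite /F expr1 psmul0 /ps_exp expr0 fact0 divr1 mul1r.
by rewrite /g /ps_inv /= /Ed ps_den0.
Qed.

Lemma F_formula k : F k.+1 k = (D * (k`!)%:R)^-1 * \prod_(1 <= l < k.+1) (c / D + l%:R).
Proof.
elim: k => [|k IH].
  by rewrite F_base big_geq // fact0 mulr1 mulr1.
have h := key k.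
have hk : (k.+1)%:R != 0 :> rat by rewrite pnatr_eq0.
have hk' : 1 + k%:R != 0 :> rat by rewrite addrC natr1 pnatr_eq0.
have -> : F k.+2 k.+1 = (c + (k.+1)%:R * D) * F k.+1 k / ((k.+1)%:R * D).
  move: (F k.+2 k.+1) (F k.+1 k) h => x y hxy; rewrite -hxy; field; by rewrite ?hk ?hk' ?D0.
rewrite IH [X in _ = _ * X]big_nat_recr //= factS natrM.
move: (\prod_(1 <= l < k.+1) (c / D + l%:R)) => p.
have := fact_neq0 k => hf.
field.
by rewrite ?hk ?hk' ?D0 ?hf.
Qed.

End Key.

Section Part2.
Variables (r d : nat) (a : 'I_r -> nat).
Hypothesis hd : (2 <= d)%N.
Hypothesis ha : forall i, (0 < a i)%N.

Let D := Dlcm a d.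

Lemma D_gt0 : (0 < D)%N.
Proof.
rewrite /D /Dlcm; apply: (big_ind (fun x => 0 < x)%N) => //.
  by move=> x y; rewrite lcmn_gt0 => -> ->.
move=> i _; rewrite muln_gt0 ha andbT; exact: leq_trans hd.
Qed.

Lemma dvd_D i : (d * a i %| D)%N.
Proof. by apply: (biglcmn_sup i). Qed.

Lemma DmE i : (d * a i * (D %/ (d * a i)))%N = D.
Proof. by rewrite mulnC divnK // dvd_D. Qed.

Lemma m_le i : (D %/ (d * a i) <= D)%N.
Proof. exact: leq_div. Qed.

Let Ed : PS := ps_den D%:R.

Definition Tf (i : 'I_r) (e : bool) (j : nat) : PS := ps_exp (- (a i * (d * j + e))%N%:R).

Lemma expN_nat (x y : nat) : (ps_exp (- (x + y)%N%:R) : PS) = (ps_exp (- x%:R) : PS) * (ps_exp (- y%:R) : PS).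
Proof. by rewrite expD natrD opprD. Qed.

Lemma factor_id i :
  (ps_num (a i)%:R : PS) * Ed
  = (ps_den (d * a i)%N%:R : PS) * \sum_(e : bool) \sum_(j : 'I_D | (j < D %/ (d * a i))%N) Tf i e j.
Proof.
set m := (D %/ (d * a i))%N.
set x : PS := ps_exp (- (d * a i)%N%:R).
have HT : \sum_(e : bool) \sum_(j : 'I_D | (j < m)%N) Tf i e j
   = (1 + ex (- (a i)%:R)) * \sum_(j < m) x ^+ j.
  rewrite big_bool /= -big_ord_widen ?m_le // -big_ord_widen ?m_le //.
  rewrite mulrDl mul1r addrC; congr (_ + _); rewrite ?mulr_sumr; apply: eq_bigr => j _;
    rewrite /Tf /x -expMn mulrN -natrM.
    by congr (ps_exp (- _%:R)) => /=; ring.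
  by rewrite expD -opprD -natrD; congr (ps_exp (- _%:R)) => /=; ring.
apply: sh_inj; rewrite HT mulrC shM shM /Ed !sh_den ps_numE -/x.
have -> : (1 - x) * ((1 + ex (- (a i)%:R)) * \sum_(j < m) x ^+ j)
   = - ((x - 1) * \sum_(j < m) x ^+ j) * (1 + ex (- (a i)%:R)) by ring.
rewrite -subrX1 /x -expMn mulrN -natrM [(m * _)%N]mulnC DmE; ring.
Qed.

Definition Sm (eps : {ffun 'I_r -> bool}) (j : {ffun 'I_r -> 'I_D}) : nat :=
  (\sum_(i < r) a i * (d * j i + eps i))%N.

Lemma ex_sum (I : Type) (s : seq I) (P : pred I) (G : I -> nat) :
  ex (- (\sum_(i <- s | P i) G i)%N%:R) = \prod_(i <- s | P i) ex (- (G i)%:R).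
Proof.
apply: (big_morph (fun n : nat => ex (- n%:R))).
  by move=> x y; rewrite expN_nat.
by rewrite oppr0 exp0.
Qed.

Lemma prodT :
  \prod_(i < r) \sum_(e : bool) \sum_(j < D | (j < D %/ (d * a i))%N) Tf i e j
  = \sum_(eps : {ffun 'I_r -> bool})
      \sum_(j : {ffun 'I_r -> 'I_D} | [forall i, (j i < D %/ (d * a i))%N])
        ex (- (Sm eps j)%:R).
Proof.
rewrite bigA_distr_bigA /=; apply: eq_bigr => eps _.
rewrite (eq_bigr (fun i => \sum_(j < D) if (j < D %/ (d * a i))%N then Tf i (eps i) j else 0));
  last by move=> i _; rewrite big_mkcond.
rewrite bigA_distr_bigA /= [RHS]big_mkcond /=; apply: eq_bigr => j _.
case: forallP => [H|/forallP/forallPn [i Hi]].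
  rewrite /Sm ex_sum; apply: eq_bigr => i _; by rewrite H.
by rewrite (bigD1 i) //= (negbTE Hi) mul0r.
Qed.

Lemma series_id :
  (\prod_(i < r) (ps_num (a i)%:R : PS)) * pinv (\prod_(i < r) (ps_den (d * a i)%N%:R : PS))
  = (\sum_(eps : {ffun 'I_r -> bool})
      \sum_(j : {ffun 'I_r -> 'I_D} | [forall i, (j i < D %/ (d * a i))%N])
        ex (- (Sm eps j)%:R)) * pinv Ed ^+ r.
Proof.
set Nm := \prod_(i < r) _; set Dn := \prod_(i < r) _; set T := \sum_eps _.
have hD : Dn * pinv Dn = 1.
  apply: ps_invP; rewrite /Dn ps_prod0 (eq_bigr (fun i => (d * a i)%N%:R)); last by move=> i _; rewrite ps_den0.
  rewrite -natr_prod pnatr_eq0 -lt0n; apply: prodn_gt0 => i; rewrite muln_gt0 ha andbT.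
  exact: leq_trans hd.
have hE : Ed * pinv Ed = 1.
  by apply: ps_invP; rewrite /Ed ps_den0 pnatr_eq0 -lt0n D_gt0.
have hP : Nm * Ed ^+ r = Dn * T.
  have -> : Ed ^+ r = \prod_(i < r) Ed by rewrite prodr_const card_ord.
  rewrite /Nm -big_split /=.
  rewrite (eq_bigr _ (fun i _ => factor_id i)) big_split /= prodT //.
have -> : Nm * pinv Dn = Nm * pinv Dn * (Ed * pinv Ed) ^+ r by rewrite hE expr1n mulr1.
rewrite exprMn.
have -> : Nm * pinv Dn * (Ed ^+ r * pinv Ed ^+ r) = (Nm * Ed ^+ r) * pinv Dn * pinv Ed ^+ r by ring.
rewrite hP.
have -> : Dn * T * pinv Dn * pinv Ed ^+ r = (Dn * pinv Dn) * T * pinv Ed ^+ r by ring.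
by rewrite hD mul1r.
Qed.

Lemma part2 (hr : (2 <= r)%N) (n : rat) :
    polypart a d n =
      (D%:R * (r.-1`!)%:R)^-1 *
      \sum_(eps : {ffun 'I_r -> bool})
        \sum_(j : {ffun 'I_r -> 'I_D} | [forall i, (j i < D %/ (d * a i))%N])
          \prod_(1 <= l < r)
            (((n - (\sum_(i < r) a i * (d * j i + eps i))%N%:R) / D%:R)
               + l%:R).
Proof.
have -> : polypart a d n = (ex n * ((\prod_(i < r) (ps_num (a i)%:R : PS)) * pinv (\prod_(i < r) (ps_den (d * a i)%N%:R : PS)))) r.-1 by [].
rewrite series_id mulrA mulr_sumr mulr_suml ps_sumE mulr_sumr; apply: eq_bigr => eps _.
rewrite mulr_sumr mulr_suml ps_sumE mulr_sumr; apply: eq_bigr => j _.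
have D0 : (D%:R : rat) != 0 by rewrite pnatr_eq0 -lt0n D_gt0.
have rE : r = r.-1.+1 by rewrite prednK // (leq_trans _ hr).
rewrite expD.
have := F_formula (n - (Sm eps j)%:R) D0 r.-1; rewrite -rE => ->.
by [].
Qed.

Section Gen.
Variable h : nat -> PS.
Hypothesis hM : forall x y, h (x + y)%N = h x * h y.
Hypothesis h0 : h 0%N = 1.

Lemma hX k x : h (k * x)%N = h x ^+ k.
Proof. by elim: k => [|k IH]; rewrite ?mul0n ?h0 // mulSn hM IH exprS. Qed.

Lemma h_sum (I : Type) (s : seq I) (P : pred I) (G : I -> nat) :
  h (\sum_(i <- s | P i) G i)%N = \prod_(i <- s | P i) h (G i).
Proof. exact: (big_morph h hM h0). Qed.

Lemma HTg i : \sum_(e : bool) \sum_(j < D | (j < D %/ (d * a i))%N) h (a i * (d * j + e))%N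
   = (1 + h (a i)) * \sum_(j < D %/ (d * a i)) h (d * a i)%N ^+ j.
Proof.
rewrite big_bool.
rewrite -(big_ord_widen D (fun j => h (a i * (d * j + true))%N)) ?m_le //.
rewrite -(big_ord_widen D (fun j => h (a i * (d * j + false))%N)) ?m_le //.
rewrite mulrDl mul1r addrC; congr (_ + _); rewrite ?mulr_sumr; apply: eq_bigr => j _;
  rewrite -hX.
  by rewrite -hM; f_equal => /=; ring.
by f_equal => /=; ring.
Qed.

Lemma prodTg :
  \prod_(i < r) \sum_(e : bool) \sum_(j < D | (j < D %/ (d * a i))%N) h (a i * (d * j + e))%N
  = \sum_(eps : {ffun 'I_r -> bool})
      \sum_(j : {ffun 'I_r -> 'I_D} | [forall i, (j i < D %/ (d * a i))%N])
        h (Sm eps j).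
Proof.
rewrite bigA_distr_bigA /=; apply: eq_bigr => eps _.
rewrite (eq_bigr (fun i => \sum_(j < D) if (j < D %/ (d * a i))%N then h (a i * (d * j + eps i))%N else 0));
  last by move=> i _; rewrite big_mkcond.
rewrite bigA_distr_bigA /= [RHS]big_mkcond /=; apply: eq_bigr => j _.
case: forallP => [H|/forallP/forallPn [i Hi]].
  rewrite /Sm h_sum; apply: eq_bigr => i _; by rewrite H.
by rewrite (bigD1 i) //= (negbTE Hi) mul0r.
Qed.
End Gen.

Definition mono (k : nat) : PS := fun t => (t == k)%:R.

Lemma monoME c (f : PS) t : (mono c * f) t = if (c <= t)%N then f (t - c)%N else 0.
Proof.
rewrite psmulE ps_mulC /ps_mul.
rewrite (eq_bigr (fun i : 'I_t.+1 => if (t - i == c)%N then f i else 0)); last first.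
  by move=> i _; rewrite /mono; case: eqP => _; rewrite ?mulr1 ?mulr0.
rewrite -big_mkcond /=.
case: (leqP c t) => ct.
  rewrite (big_pred1 (Ordinal (leq_ltn_trans (leq_subr c t) (ltnSn t)))) /=.
    by [].
  move=> i /=; apply/eqP/eqP => [E|->]; first by apply: val_inj => /=; rewrite -E subKn // -ltnS.
  by rewrite subKn.
rewrite big_pred0 // => i; apply/negbTE; apply/eqP => E.
have : (t - i <= t)%N by rewrite leq_subr.
by rewrite E leqNgt ct.
Qed.

Lemma monoD x y : mono (x + y)%N = mono x * mono y.
Proof.
apply: funext => t; rewrite monoME /mono.
case: leqP => yt.
  by have -> : (t - x == y)%N = (t == x + y)%N by apply/idP/idP => /eqP H; apply/eqP; lia.
by rewrite (_ : (t == x + y)%N = false) //; apply/negbTE/eqP; lia.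
Qed.

Lemma mono0 : mono 0%N = 1.
Proof. by []. Qed.

Definition W (c : nat) : PS := fun t => (c %| t)%:R.

Lemma W_inv c : (0 < c)%N -> W c * (1 - mono c) = 1.
Proof.
move=> c0; apply: funext => t.
rewrite mulrBr mulr1 psaddE psoppE [W c * mono c]mulrC monoME ps1E /ps_one /W.
case: leqP => ct.
  rewrite -{1}(subnK ct) dvdn_addl // subrr.
  by rewrite (_ : (t == 0)%N = false) //; apply/negbTE; rewrite -lt0n (leq_trans c0).
rewrite subr0; case: (posnP t) => [->|tp]; first by rewrite dvdn0.
rewrite (_ : (c %| t)%N = false) ?(_ : (t == 0)%N = false) //; apply/negbTE.
by apply/negP => /(dvdn_leq tp); rewrite leqNgt ct.
Qed.

Definition Gk (k : nat) : PS := fun t => (D %| t)%:R * ('C(t %/ D + k, k))%:R.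

Lemma Gk_rec k : Gk k.+1 * (1 - mono D) = Gk k.
Proof.
have D0 := D_gt0.
apply: funext => t.
rewrite mulrBr mulr1 psaddE psoppE [Gk k.+1 * mono D]mulrC monoME /Gk.
case Dt: (D %| t)%N; last first.
  rewrite !mul0r; case: leqP => // Dle.
  rewrite (_ : (D %| t - D)%N = false) ?mul0r ?subr0 //.
  by apply/negbTE; apply: contraFN Dt; rewrite -{2}(subnK Dle) dvdn_addl.
have tE : t = ((t %/ D) * D)%N by rewrite divnK.
move: (t %/ D)%N tE => q tE; subst t.
case: leqP => Dle.
  have q0 : (0 < q)%N by move: Dle; rewrite -{1}(mul1n D) leq_pmul2r.
  have E : (q * D - D)%N = ((q - 1) * D)%N by rewrite mulnBl mul1n.
  rewrite E dvdn_mull // mulnK // !mul1r.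
  clear E; case: q q0 {Dt Dle} => // q _.
  by rewrite subSS subn0 addSn addnS binS natrD addrAC subrr add0r addSn.
have q0 : q = 0%N by apply/eqP; rewrite -leqn0 -ltnS; move: Dle; rewrite -{2}(mul1n D) ltn_pmul2r.
by subst q; rewrite !add0n !binn subr0.
Qed.

Lemma Wpow k : W D ^+ k.+1 = Gk k.
Proof.
elim: k => [|k IH].
  by rewrite expr1; apply: funext => t; rewrite /W /Gk addn0 bin0 mulr1.
rewrite exprSr IH -(Gk_rec k) -mulrA [_ * W D]mulrC W_inv ?mulr1 //; exact: D_gt0.
Qed.

Definition agree (n : nat) (f g : PS) := forall t, (t <= n)%N -> f t = g t.

Lemma agreeM n f f' g g' : agree n f f' -> agree n g g' -> agree n (f * g) (f' * g').
Proof.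
move=> Hf Hg t tn; rewrite !psmulE /ps_mul; apply: eq_bigr => i _.
have it : (i <= t)%N by rewrite -ltnS.
rewrite Hf ?Hg //; [exact: leq_trans (leq_subr _ _) tn | exact: leq_trans it tn].
Qed.

Lemma agree_prod n (I : Type) (s : seq I) (F G : I -> PS) :
  (forall i, agree n (F i) (G i)) -> agree n (\prod_(i <- s) F i) (\prod_(i <- s) G i).
Proof.
move=> H; elim/big_rec2: _ => [t _ //|i y1 y2 _ IH]; exact: agreeM.
Qed.

Definition cnd (x : nat) : bool := ((x %% d)%N == 0%N) || ((x %% d)%N == 1%N).

Lemma cnd_split y : (cnd y)%:R = (d %| y)%:R + (if (0 < y)%N then (d %| y.-1)%:R else 0) :> rat.
Proof.
rewrite /cnd; case: y => [|y] /=; first by rewrite mod0n dvdn0 addr0.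
rewrite modnS; case: ifP => Hd /=.
  rewrite (_ : (d %| y)%N = false) ?addr0 //; apply/negP => Hy.
  have : (d %| 1)%N by rewrite -(dvdn_addr _ Hy) addn1.
  by rewrite dvdn1 => /eqP d1; move: hd; rewrite d1.
rewrite add0r eqSS /dvdn.
by case: (y %% d == 0)%N.
Qed.

Definition Qt n (i : 'I_r) : PS := \sum_(x < n.+1) C (cnd x)%:R * mono (a i * x).
Definition Qi (i : 'I_r) : PS := (1 + mono (a i)) * W (d * a i).

Lemma Q_agree n i : agree n (Qt n i) (Qi i).
Proof.
move=> t tn; have a0 := ha i.
rewrite /Qt /Qi ps_sumE mulrDl mul1r psaddE monoME /W.
rewrite (eq_bigr (fun x : 'I_n.+1 => (cnd x)%:R * (t == a i * x)%N%:R)); last by move=> x _; rewrite CmulE.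
case At: (a i %| t)%N; last first.
  rewrite big1; last first.
    move=> x _; rewrite (_ : (t == a i * x)%N = false) ?mulr0 //; apply: contraFF At => /eqP ->.
    exact: dvdn_mulr.
  rewrite (_ : (d * a i %| t)%N = false); last by apply: contraFF At; apply: dvdn_trans; exact: dvdn_mull.
  case: leqP => at_; last by rewrite addr0.
  rewrite (_ : (d * a i %| t - a i)%N = false) ?addr0 //.
  apply: contraFF At => H; rewrite -(subnK at_) dvdn_addl //; exact: dvdn_trans (dvdn_mull _ _) H.
have tE : t = ((t %/ a i) * a i)%N by rewrite divnK.
move: (t %/ a i)%N tE => y tE; subst t.
have yn : (y < n.+1)%N by rewrite ltnS (leq_trans _ tn) // leq_pmulr.
rewrite (bigD1 (Ordinal yn)) //= mulnC eqxx mulr1 big1 ?addr0; last first.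
  move=> x /negbTE xy; rewrite (_ : (a i * y == a i * x)%N = false) ?mulr0 //.
  by rewrite eqn_pmul2l //; apply: contraFF xy => /eqP E; apply/eqP; apply: val_inj.
rewrite [(d * a i)%N]mulnC dvdn_pmul2l // cnd_split; congr (_ + _).
rewrite -{1}(muln1 (a i)) leq_pmul2l //.
case: (posnP y) => [yz|yp] //=.
have -> : (a i * y - a i = a i * y.-1)%N by rewrite -subn1 mulnBr muln1.
by rewrite dvdn_pmul2l.
Qed.

Lemma pad_eq n : (pad a d n)%:R = (\prod_(i < r) Qt n i) n.
Proof.
rewrite /Qt bigA_distr_bigA /= ps_sumE /pad -sum1_card natr_sum big_mkcond /=.
apply: eq_bigr => x _.
rewrite big_split /= -(big_morph C CM C1) -(big_morph mono monoD mono0) CmulE /mono.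
rewrite in_set.
have -> : \prod_(i < r) ((cnd (x i))%:R : rat) = ([forall i, cnd (x i)])%:R.
  case: forallP => [H|/forallP/forallPn [i Hi]].
    by rewrite big1 // => i _; rewrite H.
  by rewrite (bigD1 i) //= (negbTE Hi) mul0r.
rewrite eq_sym.
by case: (_ == _); case: forallP => _ /=; rewrite ?mulr1 ?mulr0.
Qed.

Lemma Wda i : W (d * a i) = (\sum_(j < D %/ (d * a i)) mono (d * a i) ^+ j) * W D.
Proof.
have da0 : (0 < d * a i)%N by rewrite muln_gt0 ha andbT (leq_trans _ hd).
set x := mono (d * a i); set m := (D %/ (d * a i))%N.
have hxm : x ^+ m = mono D by rewrite -(hX monoD mono0) mulnC DmE.
have e1 : 1 - mono D = (1 - x) * \sum_(j < m) x ^+ j.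
  by rewrite -hxm; apply: (@oppr_inj _); rewrite opprB subrX1; ring.
rewrite -[LHS]mulr1 -(W_inv D_gt0) mulrC e1 mulrC.
have := W_inv da0; rewrite -/x.
clear e1 hxm; move: (W (d * a i)) (W D) x (\sum_(j < m) x ^+ j) => A B X S H.
have -> : A * (B * ((1 - X) * S)) = (A * (1 - X)) * (S * B) by ring.
by rewrite H mul1r.
Qed.

Lemma prodQi : \prod_(i < r) Qi i =
  (\sum_(eps : {ffun 'I_r -> bool})
      \sum_(j : {ffun 'I_r -> 'I_D} | [forall i, (j i < D %/ (d * a i))%N])
        mono (Sm eps j)) * W D ^+ r.
Proof.
rewrite -(prodTg monoD mono0).
have -> : W D ^+ r = \prod_(i < r) W D by rewrite prodr_const card_ord.
rewrite -big_split /=; apply: eq_bigr => i _.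
by rewrite /Qi Wda (HTg monoD mono0) mulrA.
Qed.

Lemma term_lt (x d' j e m D' : nat) : (j < m)%N -> (e <= 1)%N -> (2 <= d')%N -> (0 < x)%N ->
  (d' * x * m = D')%N -> (x * (d' * j + e) < D')%N.
Proof.
move=> jm e1 d2 a0 <-.
have h1 : (d' * j + e < d' * m)%N.
  have : (d' * j.+1 <= d' * m)%N by rewrite leq_mul2l jm orbT.
  rewrite mulnS; lia.
by rewrite [(d' * x * m)%N]mulnAC [(d' * m * x)%N]mulnC ltn_pmul2l.
Qed.

Lemma Sm_lt (hr : (0 < r)%N) eps (j : {ffun 'I_r -> 'I_D}) :
  [forall i, (j i < D %/ (d * a i))%N] -> (Sm eps j < r * D)%N.
Proof.
move/forallP => Hj.
have H : forall i, (a i * (d * j i + eps i) <= D.-1)%N.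
  move=> i; rewrite -ltnS prednK ?D_gt0 //.
  apply: term_lt (Hj i) _ hd (ha i) (DmE i); by case: (eps i).
apply: (@leq_ltn_trans (\sum_(i < r) D.-1)%N).
  by apply: leq_sum => i _; exact: H.
rewrite sum_nat_const card_ord ltn_pmul2l //.
by rewrite prednK ?D_gt0.
Qed.

Lemma binprod q k : ('C(q + k, k))%:R * (k`!)%:R = \prod_(1 <= l < k.+1) (q%:R + l%:R) :> rat.
Proof.
elim: k => [|k IH]; first by rewrite addn0 bin0 fact0 big_geq // mulr1.
rewrite big_nat_recr //= -IH factS.
have E' : (k.+1)%:R * ('C(q + k.+1, k.+1))%:R = (q%:R + (k.+1)%:R) * ('C(q + k, k))%:R :> rat.
  by rewrite -natrD -!natrM -mul_bin_diag addnS.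
rewrite natrM mulrA [_ * (k.+1)%:R]mulrC E'; ring.
Qed.

Lemma part1 (hr : (2 <= r)%N) (n : nat) :
    (pad a d n)%:R =
      (r.-1`!)%:R^-1 *
      \sum_(eps : {ffun 'I_r -> bool})
        \sum_(j : {ffun 'I_r -> 'I_D} |
                [forall i, (j i < D %/ (d * a i))%N] &&
                ((\sum_(i < r) a i * (d * j i + eps i))%N == n %[mod D]))
          \prod_(1 <= l < r)
            (((n%:R - (\sum_(i < r) a i * (d * j i + eps i))%N%:R) / D%:R)
               + l%:R : rat).
Proof.
have r0 : (0 < r)%N by apply: leq_trans hr.
have rE : r = r.-1.+1 by rewrite prednK.
have D0 := D_gt0.
have D0' : (D%:R : rat) != 0 by rewrite pnatr_eq0 -lt0n.
have ag : agree n (\prod_(i < r) Qt n i) (\prod_(i < r) Qi i).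
  by apply: agree_prod => i; exact: Q_agree.
rewrite pad_eq (ag n (leqnn n)) prodQi.
have -> : W D ^+ r = Gk r.-1 by rewrite -Wpow -rE.
rewrite mulr_suml ps_sumE mulr_sumr; apply: eq_bigr => eps _.
rewrite mulr_suml ps_sumE big_mkcondr mulr_sumr; apply: eq_bigr => j Hj.
have Slt := Sm_lt r0 eps Hj.
rewrite -/(Sm eps j) monoME.
move: (Sm eps j) Slt => S Slt.
move: (r.-1) rE => k rE.
case: leqP => Sn.
  rewrite eq_sym eqn_mod_dvd // /Gk.
  case: ifP => Hdv; last by rewrite ?mul0r ?mulr0.
  have qE : (n - S)%N = ((n - S) %/ D * D)%N by rewrite divnK.
  move: ((n - S) %/ D)%N qE => q qE.
  have -> : ((n%:R - S%:R) / D%:R : rat) = q%:R.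
    by rewrite -natrB // qE natrM mulfK.
  rewrite mul1r rE -binprod.
  have := fact_neq0 k => hk; field.
  by [].
case: ifP => Hm; last by rewrite mulr0.
move: Hm; rewrite eqn_mod_dvd ?(ltnW Sn) // => Hdv.
have qE : (S - n)%N = ((S - n) %/ D * D)%N by rewrite divnK.
move: ((S - n) %/ D)%N qE => q qE.
have q0 : (0 < q)%N.
  rewrite lt0n; apply/eqP => q0; move: qE; rewrite q0 mul0n => /eqP; rewrite subn_eq0 leqNgt Sn //.
have qr : (q < r)%N.
  rewrite -(ltn_pmul2r D0) -qE; apply: leq_ltn_trans Slt; exact: leq_subr.
have -> : ((n%:R - S%:R) / D%:R : rat) = - q%:R.
  by rewrite -opprB -natrB ?(ltnW Sn) // qE natrM mulNr mulfK.
rewrite (_ : \prod_(1 <= l < r) _ = 0) ?mulr0 //.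
apply/eqP; rewrite prodf_seq_eq0; apply/hasP; exists q; first by rewrite mem_index_iota q0 qr.
by rewrite /= addNr eqxx.
Qed.

End Part2.

Unset Implicit Arguments.
Set Strict Implicit.

Theorem theorem2p3 (r d : nat) (a : 'I_r -> nat)
  (hr : (2 <= r)%N) (hd : (2 <= d)%N) (ha : forall i, (0 < a i)%N) :
  let D := Dlcm a d in
  (forall n : nat,
    (pad a d n)%:R =
      (r.-1`!)%:R^-1 *
      \sum_(eps : {ffun 'I_r -> bool})
        \sum_(j : {ffun 'I_r -> 'I_D} |
                [forall i, (j i < D %/ (d * a i))%N] &&
                ((\sum_(i < r) a i * (d * j i + eps i))%N == n %[mod D]))
          \prod_(1 <= l < r)
            (((n%:R - (\sum_(i < r) a i * (d * j i + eps i))%N%:R) / D%:R)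
               + l%:R : rat))
  /\
  (forall n : rat,
    polypart a d n =
      (D%:R * (r.-1`!)%:R)^-1 *
      \sum_(eps : {ffun 'I_r -> bool})
        \sum_(j : {ffun 'I_r -> 'I_D} | [forall i, (j i < D %/ (d * a i))%N])
          \prod_(1 <= l < r)
            (((n - (\sum_(i < r) a i * (d * j i + eps i))%N%:R) / D%:R)
               + l%:R)).
Proof.
move=> D; split => n.
  exact: (part1 hd ha hr n).
exact: (part2 hd ha hr n).
Qed.
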